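(* Let $n \geq 3$. Then $$\max_{G} T_{\min}(G) = \left\lfloor \tfrac{n}{2} \right\rfloor \cdot \left\lceil \tfrac{n}{2} \right\rceil \qquad\text{and}\qquad \max_{G} T_{\max}(G) = (n-1)^2,$$ where both maxima range over all strongly connected directed graphs $G$ on $n$ vertices.
   Context: Let $G=(V,E)$ be a strongly connected directed graph with $|V| = n$. An ordering is a bijection $\pi: V \to \{1,\dots,n\}$. For vertices $u,v$, let $d_G(u,v)$ denote the length (number of edges) of a shortest directed path from $u$ to $v$ in $G$. The communication time of ordering $\pi$ on $G$ is $$T(G,\pi) = \sum_{i=1}^{n-1} d_G\big(\pi^{-1}(i), \pi^{-1}(i+1)\big).$$ Define $T_{\min}(G) = \min_{\pi} T(G,\pi)$ and $T_{\max}(G) = \max_{\pi} T(G,\pi)$ over all orderings $\pi$. *)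

(* Defs.v *)
From mathcomp Require Import all_boot all_order all_fingroup.
Set Implicit Arguments. Unset Strict Implicit. Unset Printing Implicit Defensive.

Definition walkb (n : nat) (e : rel 'I_n) (k : nat) (u v : 'I_n) : bool :=
  [exists p : k.-tuple 'I_n, path e u p && (last u p == v)].

Definition strongly_connected (n : nat) (e : rel 'I_n) : Prop :=
  forall u v : 'I_n, connect e u v.

(* d_G(u,v): the least k such that a walk of length k from u to v exists.
   In a graph on n vertices, a shortest path (if any) has < n edges, so
   searching k in 0..n-1 is exhaustive. *)
Definition dist (n : nat) (e : rel 'I_n) (u v : 'I_n) : nat :=
  find (fun k => walkb e k u v) (iota 0 n).

(* Communication time of ordering pi (pi : vertex -> position):
   sum of d(pi^-1(i), pi^-1(i+1)) over consecutive positions. *)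
Definition commtime (n : nat) (e : rel 'I_n) (pi : {perm 'I_n}) : nat :=
  let s := [seq (pi^-1)%g i | i <- enum 'I_n] in
  \sum_(p <- zip s (behead s)) dist e p.1 p.2.

Definition Tmin (n : nat) (e : rel 'I_n) : nat :=
  \big[minn/commtime e 1%g]_(pi : {perm 'I_n}) commtime e pi.

Definition Tmax (n : nat) (e : rel 'I_n) : nat :=
  \max_(pi : {perm 'I_n}) commtime e pi.

(* Main.v *)
Require Import Defs.
From mathcomp Require Import all_boot all_order all_fingroup zify.
Set Implicit Arguments. Unset Strict Implicit. Unset Printing Implicit Defensive.

Lemma dist_le n (e : rel 'I_n) k u v : walkb e k u v -> dist e u v <= k.
Proof.
move=> hw; rewrite /dist; case: (ltnP k n) => hk.
- rewrite leqNgt; apply/negP => H; have := before_find 0 H.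
  by rewrite nth_iota // add0n hw.
- by apply: leq_trans (find_size _ _) _; rewrite size_iota.
Qed.

Lemma dist_walk n (e : rel 'I_n) u v : dist e u v < n -> walkb e (dist e u v) u v.
Proof.
move=> H; have Hh : has (fun k => walkb e k u v) (iota 0 n) by rewrite has_find size_iota.
by have := nth_find 0 Hh; rewrite nth_iota // add0n.
Qed.

Lemma walk_cat n (e : rel 'I_n) k1 k2 u v w :
  walkb e k1 u v -> walkb e k2 v w -> walkb e (k1 + k2) u w.
Proof.
move=> /existsP [p /andP [hp /eqP hl]] /existsP [q /andP [hq /eqP hl']].
apply/existsP; exists [tuple of p ++ q].
by rewrite cat_path last_cat hl hp hq hl' eqxx.
Qed.

Lemma dist_tri n (e : rel 'I_n) u v w :
  dist e u v < n -> dist e v w < n -> dist e u w <= dist e u v + dist e v w.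
Proof. by move=> h1 h2; apply: dist_le; apply: walk_cat (dist_walk h1) (dist_walk h2). Qed.

Lemma walk_uniq n (e : rel 'I_n) u v (p : seq 'I_n) : path e u p -> last u p = v ->
  exists p' : seq 'I_n, [/\ path e u p', uniq (u :: p'), last u p' = v,
     dist e u v <= size p' & size p' < n].
Proof.
move=> hp <-; case: (shortenP hp) => p' hp' hu _.
exists p'; split => //.
- apply: dist_le; apply/existsP; exists (in_tuple p'); by rewrite /= hp' eqxx.
- have := uniq_leq_size hu (fun x _ => mem_enum 'I_n x).
  by rewrite size_enum_ord.
Qed.

Lemma sc_dist n (e : rel 'I_n) u v : strongly_connected e -> dist e u v < n.
Proof.
move=> hsc; have /connectP [p hp hl] := hsc u v.
have [p' [_ _ _ h1 h2]] := walk_uniq hp (esym hl); exact: leq_ltn_trans h1 h2.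
Qed.

Lemma walk1 n (e : rel 'I_n) u v : e u v -> dist e u v <= 1.
Proof.
move=> h; apply: dist_le; apply/existsP; exists [tuple v]; by rewrite /= h eqxx.
Qed.

Definition cost n (e : rel 'I_n) (s : seq 'I_n) :=
  \sum_(q <- zip s (behead s)) dist e q.1 q.2.

Lemma cost_cons2 n (e : rel 'I_n) x y s :
  cost e (x :: y :: s) = dist e x y + cost e (y :: s).
Proof. by rewrite /cost /= big_cons. Qed.

Lemma cost_nil n (e : rel 'I_n) : cost e [::] = 0.
Proof. by rewrite /cost big_nil. Qed.
Lemma cost1 n (e : rel 'I_n) x : cost e [:: x] = 0.
Proof. by rewrite /cost /= big_nil. Qed.

Lemma cost_all n (e : rel 'I_n) D s : (forall a b, dist e a b <= D) ->
  cost e s <= (size s).-1 * D.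
Proof.
move=> hD; elim: s => [|x [|y s] IH]; first by rewrite cost_nil.
- by rewrite cost1.
- rewrite cost_cons2 /= mulSn leq_add //.
Qed.

Lemma cost_path n (e : rel 'I_n) D x p r : (forall a b, dist e a b <= D) ->
  path e x p -> cost e (x :: p ++ r) <= size p + size r * D.
Proof.
move=> hD; elim: p x => [|y p IH] x /=.
- by move=> _; apply: leq_trans (cost_all _ hD) _.
- move=> /andP [hxy hp]; rewrite cost_cons2 addSn -add1n leq_add //.
  - exact: walk1.
  - exact: IH.
Qed.

Lemma ordering_of n (s : seq 'I_n) : uniq s -> size s = n ->
  exists pi : {perm 'I_n}, [seq (pi^-1)%g i | i <- enum 'I_n] = s.
Proof.
case: s => [|x0 s'] hu hs.
  exists 1%g; apply/nilP; by rewrite /nilp size_map size_enum_ord -hs.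
set s := x0 :: s' in hu hs *.
set f := fun i : 'I_n => nth i s i.
have finj : injective f.
  move=> i j; rewrite /f => h.
  have hi : i < size s by rewrite hs.
  have hj : j < size s by rewrite hs.
  rewrite (set_nth_default i j hj) in h.
  by apply: val_inj; apply/eqP; rewrite -(nth_uniq i hi hj hu) h.
exists (perm finj)^-1%g; rewrite invgK.
apply: (@eq_from_nth _ x0); first by rewrite size_map size_enum_ord hs.
move=> i; rewrite size_map size_enum_ord => hi.
rewrite (nth_map x0); last by rewrite size_enum_ord.
rewrite permE /f.
set o := nth x0 (enum 'I_n) i.
have ho : nat_of_ord o = i by exact: nth_enum_ord.
rewrite ho; apply: set_nth_default; by rewrite hs.
Qed.

Lemma bigmin_le (I : finType) (F : I -> nat) x j : \big[minn/x]_(i : I) F i <= F j.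
Proof.
rewrite unlock /reducebig; have : j \in index_enum I by rewrite mem_index_enum.
elim: (index_enum I) => [|i r IH] //=; rewrite inE => /orP [/eqP ->|hj].
- by rewrite geq_minl.
- by rewrite (leq_trans (geq_minr _ _) (IH hj)).
Qed.

Lemma ar (n k D : nat) : k < n -> D <= k -> k + (n-1-k)*D <= n./2 * uphalf n.
Proof.
move=> hk hD. have H1 : (n-1-k)*D <= (n-1-k)*k by rewrite leq_mul2l hD orbT.
rewrite uphalf_half. have := odd_double_half n.
set h := n./2. case: (odd n) => /= hn; rewrite -hn -!muln2 in hk H1 *.
- case: (leqP k h) => hkh; nia.
- case: (leqP k h) => hkh; nia.
Qed.

Lemma commtimeE n (e : rel 'I_n) pi :
  commtime e pi = cost e [seq (pi^-1)%g i | i <- enum 'I_n].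
Proof. by []. Qed.

Lemma Tmin_ub n (e : rel 'I_n) : 0 < n -> strongly_connected e -> Tmin e <= n./2 * uphalf n.
Proof.
move=> n0 hsc.
have hc : 0 < #|{: 'I_n * 'I_n}| by rewrite card_prod card_ord muln_gt0 n0.
have [[u v] /= hD] := eq_bigmax (fun q : 'I_n * 'I_n => dist e q.1 q.2) hc.
set D := \max_(q : 'I_n * 'I_n) dist e q.1 q.2 in hD.
have hall : forall a b, dist e a b <= D.
  by move=> a b; exact: (leq_bigmax (F := fun q : 'I_n * 'I_n => dist e q.1 q.2) (a, b)).
have /existsP [p0 /andP [hp0 /eqP hl0]] := dist_walk (sc_dist u v hsc).
have [p [hp hu hl hdp hsp]] := walk_uniq hp0 hl0.
set r := [seq x <- enum 'I_n | x \notin u :: p].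
set s := (u :: p) ++ r.
have hus : uniq s.
  rewrite cat_uniq hu filter_uniq ?enum_uniq // andbT.
  apply/hasPn => x; by rewrite mem_filter => /andP [].
have hps : perm_eq s (enum 'I_n).
  apply: uniq_perm => //; first exact: enum_uniq.
  move=> x; rewrite mem_enum mem_cat mem_filter mem_enum andbT; by case: (x \in u :: p).
have hss : size s = n by rewrite (perm_size hps) size_enum_ord.
have [pi hpi] := ordering_of hus hss.
apply: leq_trans (bigmin_le _ _ pi) _.
rewrite commtimeE hpi.
have hr : size r = n - 1 - size p by move: hss; rewrite size_cat /=; lia.
apply: leq_trans (cost_path r hall hp) _.
rewrite hr; apply: ar => //; by rewrite hD.
Qed.

Lemma Tmax_ub n (e : rel 'I_n) : strongly_connected e -> Tmax e <= (n - 1) ^ 2.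
Proof.
move=> hsc; apply/bigmax_leqP => pi _; rewrite commtimeE.
have hall : forall a b, dist e a b <= n - 1.
  move=> a b; have := sc_dist a b hsc; lia.
apply: leq_trans (cost_all _ hall) _.
by rewrite size_map size_enum_ord -subn1.
Qed.

Lemma cost_lb n (e : rel 'I_n) (r : rel 'I_n) K x s :
  (forall a b, r a b -> K <= dist e a b) -> path r x s -> size s * K <= cost e (x :: s).
Proof.
move=> hK; elim: s x => [|y s IH] x /=; first by rewrite mul0n.
move=> /andP [hxy hp]; rewrite cost_cons2 mulSn leq_add //; [exact: hK | exact: IH].
Qed.

Lemma dist_lb n (e : rel 'I_n) K a b : K <= n ->
  (forall k, k < K -> ~~ walkb e k a b) -> K <= dist e a b.
Proof.
move=> hKn hK; rewrite leqNgt; apply/negP => h.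
have := hK _ h; rewrite dist_walk //; exact: leq_trans h hKn.
Qed.

Definition ecyc n : rel 'I_n := fun u v => val u == (val v).+1 %% n.

Lemma ecyc_last n (u : 'I_n) p : path (@ecyc n) u p -> (val (last u p) + size p) %% n = val u.
Proof.
elim: p u => [|y p IH] u /=; first by rewrite addn0 modn_small.
move=> /andP [/eqP hu hp]; have H := IH _ hp.
by rewrite hu addnS -addn1 -(modnDml (last y p + size p)) H addn1.
Qed.

Lemma ecyc_sc n : strongly_connected (@ecyc n).
Proof.
case: n => [|n] u v; first by case: u.
have n0 : 0 < n.+1 by [].
have hk : forall k, connect (@ecyc n.+1) (inord ((v + k) %% n.+1)) v.
  elim=> [|k IH]; first by rewrite addn0 modn_small // inord_val connect0.
  apply: connect_trans IH; apply: connect1.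
  rewrite /ecyc /= !inordK ?ltn_pmod //.
  by apply/eqP; rewrite -(addn1 ((v + k) %% n.+1)) (modnDml (v + k) 1 n.+1) addn1 addnS.
have := hk (u + n.+1 - v); have -> : v + (u + n.+1 - v) = n.+1 * 1 + u by have := ltn_ord v; lia.
by rewrite muln1 modnDl modn_small // inord_val.
Qed.

Lemma ecyc_dist n (a b : 'I_n) : val b = (val a).+1 -> n - 1 <= dist (@ecyc n) a b.
Proof.
move=> hab; apply: dist_lb; first exact: leq_subr.
move=> k hk; apply/negP => /existsP [p /andP [hp /eqP hl]].
have := ecyc_last hp; rewrite hl size_tuple hab.
have hbn := ltn_ord b; rewrite hab in hbn.
case: (ltnP ((val a).+1 + k) n) => h.
- rewrite modn_small // => /eqP; lia.
- have -> : (val a).+1 + k = n + ((val a).+1 + k - n) by lia.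
  rewrite modnDl modn_small => [/eqP|]; lia.
Qed.

Lemma iota_sorted m k : sorted (fun a b => b == a.+1) (iota m k).
Proof.
elim: k m => [|k IH] m //=; case: k IH => [|k] IH //=.
by rewrite eqxx /=; have := IH m.+1.
Qed.

Lemma cost_enum n (e : rel 'I_n) K : (forall a b : 'I_n, val b = (val a).+1 -> K <= dist e a b) ->
  (n.-1) * K <= cost e (enum 'I_n).
Proof.
move=> hK.
have hs : sorted (relpre val (fun a b => b == a.+1)) (enum 'I_n).
  by rewrite -sorted_map val_enum_ord iota_sorted.
rewrite -[X in X.-1 * _](size_enum_ord n); case: (enum 'I_n) hs => [|x s] /= hs //.
apply: cost_lb hs => a b /= /eqP; exact: hK.
Qed.

Lemma Tmax_ex n : 0 < n -> exists e : rel 'I_n, strongly_connected e /\ Tmax e = (n - 1) ^ 2.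
Proof.
move=> n0; exists (@ecyc n); split; first exact: ecyc_sc.
apply/eqP; rewrite eqn_leq Tmax_ub ?ecyc_sc //.
apply: leq_trans (leq_bigmax 1%g); rewrite commtimeE invg1.
have -> : [seq (1%g : {perm 'I_n}) i | i <- enum 'I_n] = enum 'I_n.
  by rewrite -[RHS]map_id; apply: eq_map => i; rewrite perm1.
rewrite subn1 -mulnn.
apply: cost_enum => a b; rewrite -subn1; exact: ecyc_dist.
exact: ecyc_sc.
Qed.

Lemma costB n (e : rel 'I_n)
  (tri : forall a b c, dist e a c <= dist e a b + dist e b c) x y s :
  cost e (x :: s) <= dist e x y + cost e (y :: s).
Proof.
case: s => [|z s]; first by rewrite !cost1.
rewrite !cost_cons2 addnA leq_add2r; exact: tri.
Qed.

Lemma costA n (e : rel 'I_n)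
  (tri : forall a b c, dist e a c <= dist e a b + dist e b c) (P : pred 'I_n) x s :
  cost e (x :: filter P s) <= cost e (x :: s).
Proof.
elim: s x => [|y s IH] x //=; case: (P y).
- by rewrite !cost_cons2 leq_add2l.
- apply: leq_trans (IH x) _; rewrite cost_cons2; exact: costB.
Qed.

Lemma costC n (e : rel 'I_n)
  (tri : forall a b c, dist e a c <= dist e a b + dist e b c) (P : pred 'I_n) s :
  cost e (filter P s) <= cost e s.
Proof.
elim: s => [|y s IH] //=; case: (P y); first exact: costA.
apply: leq_trans IH _; case: s => [|z s]; first by rewrite cost_nil.
by rewrite cost_cons2 leq_addl.
Qed.

Lemma cost_lb_uniq n (e : rel 'I_n) (P : pred 'I_n) K t :
  (forall a b, a != b -> P a -> P b -> K <= dist e a b) -> uniq t -> all P t ->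
  (size t).-1 * K <= cost e t.
Proof.
move=> hK; elim: t => [|x t IH] //=; case: t IH => [|y t] IH //=.
move=> /andP [hx hu] /andP [Px /andP [Py hall]].
rewrite cost_cons2 mulSn leq_add //.
- apply: hK => //; apply: contraNneq hx => ->; exact: mem_head.
- apply: IH => //=; exact/andP.
Qed.

Lemma count_iota_ge c n : c <= n -> count (leq c) (iota 0 n) = n - c.
Proof.
move=> hc; rewrite -(subnKC hc) iotaD count_cat add0n.
rewrite (@eq_in_count _ _ pred0); last by move=> x; rewrite mem_iota => h; apply/negbTE; rewrite -ltnNge; lia.
rewrite count_pred0 (@eq_in_count _ _ predT); last by move=> x; rewrite mem_iota => h; rewrite /= ; lia.
by rewrite count_predT size_iota add0n addKn.
Qed.

Definition eT n (c : nat) : rel 'I_n := fun u v =>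
  [|| (nat_of_ord v == (nat_of_ord u).+1) && (nat_of_ord v < c), (c <= nat_of_ord u) && (nat_of_ord v == 0)
    | (nat_of_ord u == c.-1) && (c <= nat_of_ord v)].

Lemma eT_path n c (u : 'I_n) p : path (eT c) u p -> size p + nat_of_ord u < c ->
  nat_of_ord (last u p) = nat_of_ord u + size p.
Proof.
elim: p u => [|y p IH] u /=; first by rewrite addn0.
move=> /andP [he hp] hs.
have hy : nat_of_ord y = (nat_of_ord u).+1.
  move: he hs; rewrite /eT /=; case/or3P => /andP [/eqP h1 h2] //; lia.
move: hs => /= hs; rewrite IH //=; lia.
Qed.

Lemma eT_out n c (x y : 'I_n) : 0 < c -> c <= nat_of_ord x -> eT c x y -> nat_of_ord y = 0.
Proof. move=> c0 hx; rewrite /eT; case/or3P => /andP [/eqP h1 h2] //; lia. Qed.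

Lemma eT_dist n c (x y : 'I_n) : 0 < c -> c < n -> x != y -> c <= nat_of_ord x -> c <= nat_of_ord y ->
  c.+1 <= dist (eT c) x y.
Proof.
move=> c0 cn hxy hx hy; apply: dist_lb => // k hk.
apply/negP => /existsP [p /andP [hp /eqP hl]].
case: p hp hl => [[|z p] //= hsz].
- by move=> _ hl; rewrite hl eqxx in hxy.
- move=> /andP [hz hp] hl.
  have z0 := eT_out c0 hx hz.
  have hs : (size p).+1 = k by move/eqP: hsz.
  have := eT_path hp; rewrite hl z0 => H.
  have : nat_of_ord y = 0 + size p by apply: H; lia.
  lia.
Qed.

Lemma eT_line n c k (i j : 'I_n) : nat_of_ord j = nat_of_ord i + k -> nat_of_ord j < c ->
  connect (eT c) i j.
Proof.
elim: k j => [|k IH] j hj hjc.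
  by have -> : j = i by apply: val_inj; rewrite /= hj addn0.
have hk : nat_of_ord i + k < n by have := ltn_ord j; lia.
apply: connect_trans (IH (Ordinal hk) erefl _) _; first by rewrite /=; lia.
apply: connect1; rewrite /eT /=; apply/orP; left; apply/andP; split; [apply/eqP; rewrite hj; lia | lia].
Qed.

Lemma eT_sc n c : 0 < c -> c < n -> strongly_connected (@eT n c).
Proof.
move=> c0 cn.
have hc1 : c.-1 < n by lia.
have z0 : 0 < n by lia.
set z := Ordinal z0. set w := Ordinal hc1. set x := Ordinal cn.
have zw : connect (eT c) z w by apply: (@eT_line _ _ c.-1) => /=; lia.
have hto : forall u, connect (eT c) u z.
  move=> u; case: (leqP c u) => hu.
    by apply: connect1; rewrite /eT /=; lia.
  apply: connect_trans (_ : connect (eT c) u w) _.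
    by apply: (@eT_line _ _ (c.-1 - u)) => /=; lia.
  apply: connect_trans (_ : connect (eT c) w x) _.
    by apply: connect1; rewrite /eT /=; lia.
  by apply: connect1; rewrite /eT /=; lia.
have hfrom : forall v, connect (eT c) z v.
  move=> v; case: (leqP c v) => hv.
    apply: connect_trans zw _; apply: connect1; rewrite /eT /=; lia.
  by apply: (@eT_line _ _ v) => /=.
move=> u v; exact: connect_trans (hto u) (hfrom v).
Qed.

Lemma Tmin_ex n : 3 <= n -> exists e : rel 'I_n, strongly_connected e /\ Tmin e = n./2 * uphalf n.
Proof.
move=> n3.
have hn := odd_double_half n. have hu := uphalf_half n.
set c := uphalf n - 1.
have c0 : 0 < c by rewrite /c; case: (odd n) hn hu => /= hn hu; lia.
have cn : c < n by rewrite /c; case: (odd n) hn hu => /= hn hu; lia.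
have hsc := eT_sc c0 cn.
exists (eT c); split => //.
apply/eqP; rewrite eqn_leq Tmin_ub ?(leq_trans _ n3) //=.
have tri : forall a b d : 'I_n, dist (eT c) a d <= dist (eT c) a b + dist (eT c) b d.
  by move=> a b d; apply: dist_tri; apply: sc_dist.
suff hpi : forall pi : {perm 'I_n}, n./2 * uphalf n <= commtime (eT c) pi.
  apply: (big_ind (fun x => n./2 * uphalf n <= x)) => //.
  by move=> x y hx hy; rewrite leq_min hx hy.
move=> pi; rewrite commtimeE.
set s := [seq (pi^-1)%g i | i <- enum 'I_n].
set P := fun v : 'I_n => c <= nat_of_ord v.
apply: leq_trans (costC tri P s).
have hus : uniq s by rewrite map_inj_uniq ?enum_uniq //; exact: perm_inj.
have hps : perm_eq s (enum 'I_n).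
  apply: uniq_perm => //; first exact: enum_uniq.
  move=> x; rewrite mem_enum; apply/mapP; exists (pi x); first by rewrite mem_enum.
  by rewrite permK.
have hsz : size (filter P s) = n - c.
  rewrite size_filter (seq.permP hps) -(count_map (@nat_of_ord n) (leq c)).
  by rewrite val_enum_ord count_iota_ge // ltnW.
apply: leq_trans (cost_lb_uniq (K := c.+1) _ (filter_uniq P hus) (filter_all P s)).
  rewrite hsz; rewrite /c; case: (odd n) hn hu => /= hn hu; nia.
move=> a b hab ha hb; exact: eT_dist.
Qed.

Theorem proposition2 (n : nat) (hn : 3 <= n) :
  ((forall e : rel 'I_n, strongly_connected e -> Tmin e <= n./2 * uphalf n) /\
   (exists e : rel 'I_n, strongly_connected e /\ Tmin e = n./2 * uphalf n)) /\
  ((forall e : rel 'I_n, strongly_connected e -> Tmax e <= (n - 1) ^ 2) /\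
   (exists e : rel 'I_n, strongly_connected e /\ Tmax e = (n - 1) ^ 2)).
Proof.
split; split.
- move=> e; apply: Tmin_ub; exact: leq_trans hn.
- exact: Tmin_ex.
- exact: Tmax_ub.
- apply: Tmax_ex; exact: leq_trans hn.
Qed.
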